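(* Let $a,b$ be positive integers with $a\ge b$ such that either $b\ge2$, or $b=1$ and $a\ge5$, let $A=\begin{pmatrix}2&-a\\-b&2\end{pmatrix}$, and let $\Sigma$ be a linearly independent $\pi$-system in $\Delta$. Then either $|\Sigma|=1$, or there exist $w\in W$ and $j,k\in\mathbb Z_+$ such that $\Sigma_0=\{\beta_1^j,\beta_2^k\}$ is a $\pi$-system and either $w\Sigma=\Sigma_0$ or $w\Sigma=-\Sigma_0$.
   Context: Let $\mathfrak g(A)$ be the Kac–Moody algebra of $A=\begin{pmatrix}2&-a\\-b&2\end{pmatrix}$, with simple roots $\alpha_1,\alpha_2$, root system $\Delta$, real roots $\Delta_{\mathrm{re}}$ and Weyl group $W$. $\mathbb Z_+=\{0,1,2,\dots\}$. Define integers $c_j,d_j$ by $c_0=d_0=0$, $c_1=d_1=1$, $c_{k+2}+c_k=a d_{k+1}$, $d_{k+2}+d_k=b c_{k+1}$, and set $\beta_1^j=c_j\alpha_1+d_{j+1}\alpha_2$, $\beta_2^j=c_{j+1}\alpha_1+d_j\alpha_2$ ($j\in\mathbb Z_+$); these are exactly the positive real roots. A subset $\Sigma\subseteq\Delta_{\mathrm{re}}$ is a $\pi$-system if $\alpha-\beta\notin\Delta$ for all $\alpha,\beta\in\Sigma$. *)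

(* Defs.v *)
From HB Require Import structures.
From mathcomp Require Import all_boot all_order all_algebra.
Set Implicit Arguments. Unset Strict Implicit. Unset Printing Implicit Defensive.
Import Order.TTheory GRing.Theory Num.Theory.
Local Open Scope ring_scope.

(* Rank-2 Kac-Moody root data for A = [[2,-a],[-b,2]].
   An element m*alpha_1 + n*alpha_2 of the root lattice Q is the pair (m,n) : int*int. *)

Section KM.
Variables a b : nat.

(* simple reflections: s_i(v) = v - <v, alpha_i^vee> alpha_i,
   <m a1 + n a2, a1^vee> = 2m - a n,  <m a1 + n a2, a2^vee> = -b m + 2n.
   [true] encodes s_1, [false] encodes s_2. *)
Definition srefl (i : bool) (v : int * int) : int * int :=
  if i then (a%:Z * v.2 - v.1, v.2) else (v.1, b%:Z * v.1 - v.2).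

(* An element of the Weyl group W is given by a word in s_1, s_2. *)
Definition Wact (w : seq bool) (v : int * int) : int * int := foldr srefl v w.

Definition simple_root (i : bool) : int * int := if i then (1, 0) else (0, 1).

Definition negr (v : int * int) : int * int := (- v.1, - v.2).

Definition real_root (v : int * int) : Prop :=
  exists (w : seq bool) (i : bool), v = Wact w (simple_root i).

(* Kac's fundamental set K: alpha in Q_+ \ {0} with connected support and
   <alpha, alpha_i^vee> <= 0 for i = 1,2 *)
Definition Kset (v : int * int) : Prop :=
  0 < v.1 /\ 0 < v.2 /\ 2 * v.1 - a%:Z * v.2 <= 0 /\ 2 * v.2 - b%:Z * v.1 <= 0.

(* imaginary roots: Delta_im = W K  union  - W K  (Kac, Thm 5.4) *)
Definition imag_root (v : int * int) : Prop :=
  exists (w : seq bool) (k : int * int),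
    Kset k /\ (v = Wact w k \/ v = negr (Wact w k)).

Definition root (v : int * int) : Prop := real_root v \/ imag_root v.

Definition pi_system (s : seq (int * int)) : Prop :=
  (forall x, x \in s -> real_root x) /\
  (forall x y, x \in s -> y \in s -> ~ root (x.1 - y.1, x.2 - y.2)).

(* the integers c_j, d_j: cd n = (c_n, d_n, c_{n+1}, d_{n+1}) *)
Fixpoint cd (n : nat) : int * int * int * int :=
  match n with
  | 0%N => (0, 0, 1, 1)
  | n'.+1 => let: (c, d, c', d') := cd n' in (c', d', a%:Z * d' - c, b%:Z * c' - d)
  end.

Definition cseq (n : nat) : int := (cd n).1.1.1.
Definition dseq (n : nat) : int := (cd n).1.1.2.

Definition beta1 (j : nat) : int * int := (cseq j, dseq j.+1).
Definition beta2 (j : nat) : int * int := (cseq j.+1, dseq j).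

End KM.

Definition tovec (v : int * int) : 'rV[rat]_2 :=
  \row_(i < 2) (if i == ord0 then v.1%:~R else v.2%:~R).

Definition lin_indep (s : seq (int * int)) : bool := free (map tovec s).

(* Main.v *)
Require Import Defs.
From mathcomp Require Import all_boot all_order all_algebra.
From mathcomp Require Import zify ring lra.
Set Implicit Arguments. Unset Strict Implicit. Unset Printing Implicit Defensive.
Import Order.TTheory GRing.Theory Num.Theory.
Local Open Scope ring_scope.

Section S.
Variables a b : nat.

Definition sub (u v : int * int) : int * int := (u.1 - v.1, u.2 - v.2).
Definition add (u v : int * int) : int * int := (u.1 + v.1, u.2 + v.2).

Lemma negrK v : negr (negr v) = v.
Proof. by case: v => x y; rewrite /negr /= !opprK. Qed.

Lemma srefl_neg i v : srefl a b i (negr v) = negr (srefl a b i v).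
Proof. by case: i; case: v => x y; rewrite /srefl /negr /=; congr pair; ring. Qed.

Lemma srefl_sub i u v : srefl a b i (sub u v) = sub (srefl a b i u) (srefl a b i v).
Proof. by case: i; case: v => x y; case: u => x' y'; rewrite /srefl /sub /=; congr pair; ring. Qed.

Lemma srefl_inv i v : srefl a b i (srefl a b i v) = v.
Proof. by case: i; case: v => x y; rewrite /srefl /=; congr pair; ring. Qed.

Lemma Wact_neg w v : Wact a b w (negr v) = negr (Wact a b w v).
Proof. by elim: w => //= i w ->; rewrite srefl_neg. Qed.

Lemma Wact_sub w u v : Wact a b w (sub u v) = sub (Wact a b w u) (Wact a b w v).
Proof. by elim: w => //= i w ->; rewrite srefl_sub. Qed.

Lemma Wact_cat w1 w2 v : Wact a b (w1 ++ w2) v = Wact a b w1 (Wact a b w2 v).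
Proof. by rewrite /Wact foldr_cat. Qed.

Lemma Wact_inv w v : Wact a b (rev w) (Wact a b w v) = v.
Proof.
elim: w v => //= i w IH v.
by rewrite rev_cons -cats1 Wact_cat /= srefl_inv IH.
Qed.

Lemma real_W w v : real_root a b v -> real_root a b (Wact a b w v).
Proof. by case=> w' [i ->]; exists (w ++ w'), i; rewrite Wact_cat. Qed.

Lemma real_neg v : real_root a b v -> real_root a b (negr v).
Proof.
case=> w [i ->]; exists (w ++ [:: i]), i; rewrite Wact_cat -Wact_neg /=.
congr (Wact _ _ _ _).
by case: i; rewrite /srefl /negr /=; congr pair; ring.
Qed.

Lemma imag_W w v : imag_root a b v -> imag_root a b (Wact a b w v).
Proof.
case=> w' [k [Hk [->|->]]]; exists (w ++ w'), k; split => //.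
  by left; rewrite Wact_cat.
by right; rewrite Wact_cat Wact_neg.
Qed.

Lemma imag_neg v : imag_root a b v -> imag_root a b (negr v).
Proof.
case=> w' [k [Hk [->|->]]]; exists w', k; split => //; first by right.
by left; rewrite negrK.
Qed.

Lemma root_W w v : Defs.root a b v -> Defs.root a b (Wact a b w v).
Proof. by case=> H; [left; apply: real_W | right; apply: imag_W]. Qed.

Lemma root_neg v : Defs.root a b v -> Defs.root a b (negr v).
Proof. by case=> H; [left; apply: real_neg | right; apply: imag_neg]. Qed.

Lemma root_Winv w v : Defs.root a b (Wact a b w v) -> Defs.root a b v.
Proof. by move=> /(root_W (rev w)); rewrite Wact_inv. Qed.


Lemma cseqS n : cseq a b n.+1 = (cd a b n).1.2.
Proof. by rewrite /cseq /=; case: (cd a b n) => [[[c d] c'] d']. Qed.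
Lemma dseqS n : dseq a b n.+1 = (cd a b n).2.
Proof. by rewrite /dseq /=; case: (cd a b n) => [[[c d] c'] d']. Qed.
Lemma cseq_rec n : cseq a b n.+2 = a%:Z * dseq a b n.+1 - cseq a b n.
Proof. by rewrite /cseq /dseq /=; case: (cd a b n) => [[[c d] c'] d']. Qed.
Lemma dseq_rec n : dseq a b n.+2 = b%:Z * cseq a b n.+1 - dseq a b n.
Proof. by rewrite /cseq /dseq /=; case: (cd a b n) => [[[c d] c'] d']. Qed.
Lemma cseq0 : cseq a b 0 = 0. Proof. by []. Qed.
Lemma dseq0 : dseq a b 0 = 0. Proof. by []. Qed.
Lemma cseq1 : cseq a b 1 = 1. Proof. by []. Qed.
Lemma dseq1 : dseq a b 1 = 1. Proof. by []. Qed.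

Definition pos (n : int) : int * int :=
  match n with Posz k => beta2 a b k | Negz k => negr (beta1 a b k) end.

Lemma pos_Posz k : pos (Posz k) = beta2 a b k. Proof. by []. Qed.
Lemma pos_Negz k : pos (Negz k) = negr (beta1 a b k). Proof. by []. Qed.

Lemma R1 n : srefl a b true (pos n) = negr (pos (- n)).
Proof.
case: n => [[|k]|k].
- by rewrite /= /beta2 cseq1 dseq0 /srefl /negr /=; congr pair; ring.
- rewrite -NegzE pos_Posz pos_Negz negrK /beta2 /beta1 /srefl /= cseq_rec.
  by congr pair; ring.
- rewrite NegzE opprK pos_Posz -NegzE pos_Negz /beta2 /beta1 /srefl /negr /= cseq_rec.
  by congr pair; ring.
Qed.

Lemma R2 n : srefl a b false (pos n) = negr (pos (- 2 - n)).
Proof.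
case: n => [k|[|k]].
- have -> : - 2 - Posz k = Negz k.+1 by rewrite NegzE; lia.
  rewrite pos_Posz pos_Negz negrK /beta2 /beta1 /srefl /= dseq_rec.
  by congr pair; ring.
- have -> : - 2 - Negz 0 = Negz 0 by rewrite NegzE; lia.
  rewrite pos_Negz negrK /beta1 cseq0 dseq1 /srefl /negr /=; congr pair; ring.
- have -> : - 2 - Negz k.+1 = Posz k by rewrite NegzE; lia.
  rewrite pos_Posz pos_Negz /beta2 /beta1 /srefl /negr /= dseq_rec.
  by congr pair; ring.
Qed.

Lemma real_pos v : real_root a b v -> exists n, v = pos n \/ v = negr (pos n).
Proof.
case=> w [i ->]; elim: w => /= [|j w [n [->|->]]].
- case: i; [exists 0; left | exists (Negz 0); right];
  rewrite /= ?negrK /beta2 /beta1 /cseq /dseq //=.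
- case: j; [rewrite R1; exists (-n) | rewrite R2; exists (-2 - n)]; by right.
- case: j; rewrite srefl_neg ?R1 ?R2 negrK; by eexists; left.
Qed.

Lemma Wact_nil v : Wact a b [::] v = v.
Proof. by []. Qed.

Lemma Wact_cons i w v : Wact a b (i :: w) v = srefl a b i (Wact a b w v).
Proof. by []. Qed.

Definition Tw (t : int) : seq bool :=
  match t with Posz k => flatten (nseq k [:: true; false])
             | Negz k => flatten (nseq k.+1 [:: false; true]) end.

Lemma Wact_flat x k v : Wact a b (flatten (nseq k.+1 x)) v = Wact a b x (Wact a b (flatten (nseq k x)) v).
Proof. by rewrite -Wact_cat. Qed.

Lemma Tw_pos t n : Wact a b (Tw t) (pos n) = pos (n + 2 * t).
Proof.
case: t => [k|k]; rewrite /Tw.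
- elim: k n => [|k IH] n; first by rewrite /= mulr0 addr0.
  rewrite Wact_flat IH !Wact_cons Wact_nil R2 srefl_neg R1 negrK; congr pos; lia.
- rewrite NegzE; elim: k n => [|k IH] n.
  + rewrite Wact_flat !Wact_cons !Wact_nil R1 srefl_neg R2 negrK; congr pos; lia.
  + rewrite Wact_flat IH !Wact_cons Wact_nil R1 srefl_neg R2 negrK; congr pos; lia.
Qed.


Definition Nf (v : int * int) : int :=
  b%:Z * v.1 ^+ 2 - a%:Z * b%:Z * v.1 * v.2 + a%:Z * v.2 ^+ 2.

Lemma descent_h (Ha : (0 < a)%N) (Hb : (0 < b)%N) (h : nat) :
  forall x y : int, 0 < x -> 0 < y -> x + y <= h%:Z -> Nf (x, y) <= 0 ->
  imag_root a b (x, y).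
Proof.
have Ha' : 0 < a%:Z by lia.
have Hb' : 0 < b%:Z by lia.
elim: h => [|h IH] x y Hx Hy Hh HN; first by lia.
rewrite /Nf /= in HN.
case: (boolP ((2 * x - a%:Z * y <= 0) && (2 * y - b%:Z * x <= 0))) => [/andP [H1 H2]|].
  exists [::], (x, y); split; last by left.
  by rewrite /Kset /=; split; [|split; [|split]].
rewrite negb_and -!ltNge => /orP [H1|H2].
- have Hx' : 0 < a%:Z * y - x.
    rewrite ltNge; apply/negP => Hc.
    have : 0 <= b%:Z * x * (x - a%:Z * y) by apply: mulr_ge0; [apply: mulr_ge0; lia | lia].
    have : 0 < a%:Z * y ^+ 2 by apply: mulr_gt0 => //; apply: exprn_gt0.
    move=> P1 P2.
    have E : b%:Z * x ^+ 2 - a%:Z * b%:Z * x * y + a%:Z * y ^+ 2 = b%:Z * x * (x - a%:Z * y) + a%:Z * y ^+ 2 by ring.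
    lia.
  have [w [k [Hk Hw]]] : imag_root a b (a%:Z * y - x, y).
    apply: IH => //; first by lia.
    rewrite /Nf /=.
    have E : b%:Z * (a%:Z * y - x) ^+ 2 - a%:Z * b%:Z * (a%:Z * y - x) * y + a%:Z * y ^+ 2 = b%:Z * x ^+ 2 - a%:Z * b%:Z * x * y + a%:Z * y ^+ 2 by ring.
    by rewrite E.
  exists (true :: w), k; split => //.
  have -> : (x, y) = srefl a b true (a%:Z * y - x, y) by rewrite /srefl /=; congr pair; ring.
  by case: Hw => ->; [left | right; rewrite -srefl_neg].
- have Hy' : 0 < b%:Z * x - y.
    rewrite ltNge; apply/negP => Hc.
    have : 0 <= a%:Z * y * (y - b%:Z * x) by apply: mulr_ge0; [apply: mulr_ge0; lia | lia].
    have : 0 < b%:Z * x ^+ 2 by apply: mulr_gt0 => //; apply: exprn_gt0.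
    move=> P1 P2.
    have E : b%:Z * x ^+ 2 - a%:Z * b%:Z * x * y + a%:Z * y ^+ 2 = a%:Z * y * (y - b%:Z * x) + b%:Z * x ^+ 2 by ring.
    lia.
  have [w [k [Hk Hw]]] : imag_root a b (x, b%:Z * x - y).
    apply: IH => //; first by lia.
    rewrite /Nf /=.
    have E : b%:Z * x ^+ 2 - a%:Z * b%:Z * x * (b%:Z * x - y) + a%:Z * (b%:Z * x - y) ^+ 2 = b%:Z * x ^+ 2 - a%:Z * b%:Z * x * y + a%:Z * y ^+ 2 by ring.
    by rewrite E.
  exists (false :: w), k; split => //.
  have -> : (x, y) = srefl a b false (x, b%:Z * x - y) by rewrite /srefl /=; congr pair; ring.
  by case: Hw => ->; [left | right; rewrite -srefl_neg].
Qed.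

Lemma descent (Ha : (0 < a)%N) (Hb : (0 < b)%N) (x y : int) :
  0 < x -> 0 < y -> Nf (x, y) <= 0 -> Defs.root a b (x, y).
Proof.
move=> Hx Hy HN; right; apply: (@descent_h Ha Hb (absz (x + y))) => //.
rewrite abszE; lia.
Qed.


Fixpoint ef (i : nat) : int * int :=
  match i with
  | 0%N => (0, 1)
  | i'.+1 => ((ef i').2 - (ef i').1, a%:Z * b%:Z * ((ef i').2 - (ef i').1) - (ef i').2)
  end.

Lemma cd_step n : cd a b n.+1 =
  ((cd a b n).1.2, (cd a b n).2, a%:Z * (cd a b n).2 - (cd a b n).1.1.1,
   b%:Z * (cd a b n).1.2 - (cd a b n).1.1.2).
Proof. by rewrite /=; case: (cd a b n) => [[[c d] c'] d']. Qed.

Lemma cd_shape i :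
  cd a b (i.*2) = (a%:Z * (ef i).1, b%:Z * (ef i).1, (ef i).2, (ef i).2) /\
  cd a b (i.*2).+1 = ((ef i).2, (ef i).2, a%:Z * ((ef i).2 - (ef i).1),
                      b%:Z * ((ef i).2 - (ef i).1)).
Proof.
elim: i => [|i [H1 H2]].
  by split; rewrite /= ?mulr0 ?subr0 ?mulr1.
have E : cd a b (i.+1).*2 = cd a b (i.*2).+2 by rewrite doubleS.
have H3 : cd a b (i.+1).*2 = (a%:Z * (ef i.+1).1, b%:Z * (ef i.+1).1, (ef i.+1).2, (ef i.+1).2).
  by rewrite E cd_step H2 /=; congr (_, _, _, _); ring.
split => //.
by rewrite cd_step H3 /=; congr (_, _, _, _); ring.
Qed.

Lemma ef_inv (Hm : 4 <= a%:Z * b%:Z) i :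
  0 <= (ef i).1 /\ 2 * (ef i).1 + 1 <= (ef i).2 /\
  (ef i).2 ^+ 2 - a%:Z * b%:Z * (ef i).1 * (ef i).2 + a%:Z * b%:Z * (ef i).1 ^+ 2 = 1.
Proof.
elim: i => [|i [H1 [H2 H3]]]; first by rewrite /=; split; [lia|split; [lia|ring]].
rewrite /=; set e := (ef i).1 in H1 H2 H3 *; set f := (ef i).2 in H1 H2 H3 *.
set m := a%:Z * b%:Z in Hm H3 *.
split; first by lia.
split; first by nia.
rewrite -H3; ring.
Qed.


Definition hyp := [/\ (0 < b)%N, (b <= a)%N & ((2 <= b)%N \/ (b = 1%N /\ (5 <= a)%N))].

Lemma hyp_facts : hyp ->
  [/\ 0 < b%:Z, 2 <= a%:Z, 4 <= a%:Z * b%:Z, a%:Z + b%:Z <= a%:Z * b%:Z * (a%:Z * b%:Z - 3)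
   & (b%:Z = 1 \/ a%:Z + b%:Z <= a%:Z * b%:Z)].
Proof.
case=> H1 H2 [H3|[H3 H4]].
  have Ha : (2 <= a)%N by apply: leq_trans H3 H2.
  have h1 : 0 < b%:Z by lia.
  have h2 : 2 <= a%:Z by lia.
  have h3 : 2 <= b%:Z by lia.
  have h4 : 4 <= a%:Z * b%:Z by nia.
  have h5 : a%:Z + b%:Z <= a%:Z * b%:Z by nia.
  split => //; last by right.
  nia.
subst b.
have h2 : 5 <= a%:Z by lia.
split; try lia; rewrite mulr1; nia.
Qed.

Lemma betaS2 g : beta2 a b g = ((cd a b g).1.2, (cd a b g).1.1.2).
Proof. by rewrite /beta2 cseqS. Qed.

Lemma even_odd (g : nat) : exists i, g = i.*2 \/ g = (i.*2).+1.
Proof.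
exists g./2; have := odd_double_half g; case: (odd g) => /= H; [right|left]; lia.
Qed.

Lemma le0_by (X Y p I : int) : I = 1 -> X = Y + p * (I - 1) -> Y <= 0 -> X <= 0.
Proof. by move=> -> ->; rewrite subrr mulr0 addr0. Qed.

Lemma Nf_eq (e f m : int) : f ^+ 2 - m * e * f + m * e ^+ 2 = 1 -> forall X Y p : int, X = Y + p * (f ^+ 2 - m * e * f + m * e ^+ 2 - 1) -> X = Y.
Proof. by move=> -> X Y p ->; rewrite subrr mulr0 addr0. Qed.

Lemma keyineq (m e f : int) : 4 <= m -> 0 <= e -> 2 * e + 1 <= f -> 2 <= m * (f - e) - 2 * f.
Proof.
move=> hm he hf.
have h1 : 0 <= (m - 4) * e by apply: mulr_ge0; lia.
have h2 : 0 <= (m - 2) * (f - 2 * e - 1) by apply: mulr_ge0; lia.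
lia.
Qed.

Lemma keyineq2 (m e f : int) : 4 <= m -> 0 <= e -> 2 * e + 1 <= f ->
  m - 3 <= (m * (f - e) - f) - 2 * (f - e).
Proof.
move=> hm he hf.
have h1 : 0 <= (m - 4) * e by apply: mulr_ge0; lia.
have h2 : 0 <= (m - 3) * (f - 2 * e - 1) by apply: mulr_ge0; lia.
lia.
Qed.

Lemma KL0 (H : hyp) g : (0 < g)%N -> Defs.root a b (sub (beta2 a b g) (1, 0)).
Proof.
have [hb ha hm hmm hab] := hyp_facts H.
have [Ha Hb] : (0 < a)%N /\ (0 < b)%N by lia.
move=> Hg; case: (even_odd g) Hg => i [->|->] Hg; rewrite betaS2.
- case: i Hg => [|i] Hg //.
  have [-> _] := cd_shape i.+1.
  have [E1 [E2 E3]] := ef_inv hm i.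
  have [F1 [F2 F3]] := ef_inv hm i.+1.
  rewrite /sub /=.
  move: F1 F2 F3 => /=; set e := (ef i).1; set f := (ef i).2 => F1 F2 F3.
  set m := a%:Z * b%:Z in hm hmm hab E3 F3 *.
  have K := keyineq hm E1 E2.
  rewrite subr0; apply: descent => //; [lia | apply: mulr_gt0; lia |].
  rewrite /Nf /=.
  apply: (le0_by F3 (Y := b%:Z * (2 - 2 * (m * (f - e) - f) + m * (f - e))) (p := b%:Z)).
    by rewrite /m; ring.
  apply: mulr_ge0_le0; lia.
- have [_ ->] := cd_shape i.
  rewrite /sub /= subr0.
  case: i Hg => [|i] Hg.
    rewrite /= !subr0 !mulr1.
    case: hab => [hb1|hab].
      left; exists [:: true; false], true; rewrite /= /srefl /= hb1; congr pair; ring.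
    apply: descent => //; first lia.
    have -> : Nf (a%:Z - 1, 1) = a%:Z + b%:Z - a%:Z * b%:Z by rewrite /Nf /=; ring.
    lia.
  have [E1 [E2 E3]] := ef_inv hm i.
  have K : a%:Z * b%:Z - 3 <= (ef i.+1).2 - 2 * (ef i.+1).1 := keyineq2 hm E1 E2.
  have [F1 [F2 F3]] := ef_inv hm i.+1.
  move: K F1 F2 F3; set e := (ef i.+1).1; set f := (ef i.+1).2 => K F1 F2 F3.
  set m := a%:Z * b%:Z in hm hmm hab K F3 *.
  have P1 : 0 <= a%:Z * (f - e - 1) by apply: mulr_ge0; lia.
  have P2 : 0 <= m * (f - 2 * e - (m - 3)) by apply: mulr_ge0; lia.
  apply: descent => //; [lia|lia|].
  rewrite /Nf /=.
  apply: (le0_by F3 (Y := a%:Z + b%:Z - m * (f - 2 * e)) (p := a%:Z)).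
    by rewrite /m; ring.
  lia.
Qed.

Lemma KL1 (H : hyp) h : Defs.root a b (add (beta2 a b h) (0, 1)).
Proof.
have [hb ha hm hmm hab] := hyp_facts H.
have [Ha Hb] : (0 < a)%N /\ (0 < b)%N by lia.
case: (even_odd h) => i [->|->]; rewrite betaS2.
- have [-> _] := cd_shape i.
  rewrite /add /= addr0.
  case: i => [|i].
    rewrite /= !mulr0 add0r.
    case: hab => [hb1|hab].
      left; exists [:: false], true; rewrite /= /srefl /= hb1; congr pair; ring.
    apply: descent => //.
    have -> : Nf (1, 1) = a%:Z + b%:Z - a%:Z * b%:Z by rewrite /Nf /=; ring.
    lia.
  have [E1 [E2 E3]] := ef_inv hm i.
  have K : a%:Z * b%:Z - 3 <= (ef i.+1).2 - 2 * (ef i.+1).1 := keyineq2 hm E1 E2.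
  have [F1 [F2 F3]] := ef_inv hm i.+1.
  move: K F1 F2 F3; set e := (ef i.+1).1; set f := (ef i.+1).2 => K F1 F2 F3.
  set m := a%:Z * b%:Z in hm hmm hab K F3 *.
  have P1 : 0 <= b%:Z * e by apply: mulr_ge0; lia.
  have P2 : 0 <= m * (f - 2 * e - (m - 3)) by apply: mulr_ge0; lia.
  apply: descent => //; [lia|lia|].
  rewrite /Nf /=.
  apply: (le0_by F3 (Y := a%:Z + b%:Z - m * (f - 2 * e)) (p := b%:Z)).
    by rewrite /m; ring.
  lia.
- have [_ ->] := cd_shape i.
  rewrite /add /= addr0.
  have [E1 [E2 E3]] := ef_inv hm i.
  move: E1 E2 E3; set e := (ef i).1; set f := (ef i).2 => E1 E2 E3.
  set m := a%:Z * b%:Z in hm hmm hab E3 *.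
  have K := keyineq hm E1 E2.
  have P1 : 0 <= a%:Z * (f - e - 1) by apply: mulr_ge0; lia.
  apply: descent => //; [lia|lia|].
  rewrite /Nf /=.
  apply: (le0_by E3 (Y := a%:Z * (2 + 2 * f - m * (f - e))) (p := a%:Z)).
    by rewrite /m; ring.
  apply: mulr_ge0_le0; lia.
Qed.


Definition spos (s : bool) n := if s then pos n else negr (pos n).


Lemma parity (n : int) : exists t : int, n = 2 * t \/ n = 2 * t + 1.
Proof. exists (n %/ 2)%Z; lia. Qed.

Lemma sub_neg u v : sub (negr u) (negr v) = negr (sub u v).
Proof. by rewrite /sub /negr /=; congr pair; ring. Qed.

Lemma nested_root (H : hyp) n m : n < m -> Defs.root a b (sub (pos n) (pos m)).
Proof.
move=> Hnm.
have [g Hg] : exists g : nat, m - n = Posz g.+1.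
  by exists (absz (m - n)).-1; lia.
have [t [Hn|Hn]] := parity n.
- apply: (root_Winv (w := Tw (- t))).
  rewrite Wact_sub !Tw_pos.
  have -> : n + 2 * - t = Posz 0 by lia.
  have -> : m + 2 * - t = Posz g.+1 by lia.
  rewrite !pos_Posz.
  have -> : sub (beta2 a b 0) (beta2 a b g.+1) = negr (sub (beta2 a b g.+1) (1, 0)).
    by rewrite /beta2 /sub /negr /= cseq1 dseq0; congr pair; ring.
  by apply: root_neg; apply: KL0.
- apply: (root_Winv (w := Tw (- (t + 1)))).
  rewrite Wact_sub !Tw_pos.
  have -> : n + 2 * - (t + 1) = Negz 0 by rewrite NegzE; lia.
  have -> : m + 2 * - (t + 1) = Posz g by lia.
  rewrite pos_Posz pos_Negz.
  have -> : sub (negr (beta1 a b 0)) (beta2 a b g) = negr (add (beta2 a b g) (0, 1)).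
    by rewrite /beta1 /sub /negr /add /= cseq0 dseq1; congr pair; ring.
  by apply: root_neg; apply: KL1.
Qed.

Definition goodpair (p q : int * int) :=
  exists (w : seq bool) (j k : nat),
    [:: Wact a b w p; Wact a b w q] =i [:: beta1 a b j; beta2 a b k] \/
    [:: Wact a b w p; Wact a b w q] =i map negr [:: beta1 a b j; beta2 a b k].

Lemma goodpair_sym p q : goodpair p q -> goodpair q p.
Proof.
case=> w [j [k [E|E]]]; exists w, j, k; [left|right] => z; rewrite -E !inE orbC //.
Qed.

Lemma pair_main (H : hyp) sx sy n m : n < m ->
  ~ Defs.root a b (sub (spos sx n) (spos sy m)) -> goodpair (spos sx n) (spos sy m).
Proof.
move=> Hnm Hr.
have [g Hg] : exists g : nat, m - n = Posz g.+1.
  by exists (absz (m - n)).-1; lia.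
have Hsame : sx <> sy.
  move=> E; subst sy; apply: Hr; case: sx; rewrite /spos.
    exact: nested_root.
  by rewrite sub_neg; apply: root_neg; apply: nested_root.
have [t [Hn|Hn]] := parity n.
- exists (Tw t ++ [:: true]), g, 0%N.
  have E1 : - n + 2 * t = Posz 0 by lia.
  have E2 : - m + 2 * t = Negz g by rewrite NegzE; lia.
  clear Hr; case: sx sy Hsame => [] [] // _;
    rewrite /spos !Wact_cat !Wact_cons !Wact_nil ?srefl_neg !R1 ?Wact_neg !Tw_pos E1 E2
            pos_Posz pos_Negz ?negrK.
    by right => z; rewrite !inE orbC.
  by left => z; rewrite !inE orbC.
- exists (Tw (- (t + 1))), 0%N, g.
  have E1 : n + 2 * - (t + 1) = Negz 0 by rewrite NegzE; lia.
  have E2 : m + 2 * - (t + 1) = Posz g by lia.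
  clear Hr; case: sx sy Hsame => [] [] // _;
    rewrite /spos ?Wact_neg !Tw_pos E1 E2 pos_Posz pos_Negz ?negrK.
    by right.
  by left.
Qed.

End S.

Lemma free_size3 (s : seq 'rV[rat]_2) : free s -> (size s <= 2)%N.
Proof.
move=> /eqnP <-.
have := dimvS (subvf <<s>>%VS); rewrite dimvf /dim /=.
by [].
Qed.

Lemma tovec_neg v : tovec (negr v) = - tovec v.
Proof. by apply/rowP => i; rewrite !mxE; case: ifP => _; rewrite /= intrN. Qed.

Lemma lin2 x y : lin_indep [:: x; y] -> x <> y /\ x <> negr y.
Proof.
rewrite /lin_indep /= free_cons => /andP [Hn _]; split => E; move: Hn; rewrite E.
  by rewrite memv_span ?mem_head.
by rewrite tovec_neg memvN memv_span ?mem_head.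
Qed.

Lemma pi_transfer a b w Sig S : pi_system a b Sig ->
  (map (Wact a b w) Sig =i S \/ map (Wact a b w) Sig =i map negr S) -> pi_system a b S.
Proof.
case=> Hre Hd [E|E]; split.
- move=> s; rewrite -E => /mapP [x Hx ->]; exact: real_W (Hre x Hx).
- move=> s t; rewrite -!E => /mapP [x Hx ->] /mapP [y Hy ->].
  move=> Hr; apply: (Hd x y Hx Hy); apply: (root_Winv (w := w)).
  by rewrite (Wact_sub a b w x y).
- move=> s Hs; have : negr s \in map negr S by apply: map_f.
  rewrite -E => /mapP [x Hx Ex].
  by rewrite -(negrK s) Ex; apply: real_neg; exact: real_W (Hre x Hx).
- move=> s t Hs Ht.
  have : negr s \in map negr S by apply: map_f.
  have : negr t \in map negr S by apply: map_f.
  rewrite -!E => /mapP [y Hy Ey] /mapP [x Hx Ex].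
  move=> Hr; apply: (Hd y x Hy Hx); apply: (root_Winv (w := w)).
  rewrite (Wact_sub a b w y x) -Ey -Ex.
  have -> : sub (negr t) (negr s) = (s.1 - t.1, s.2 - t.2) by rewrite /sub /negr /=; congr pair; ring.
  exact: Hr.
Qed.

Lemma real_spos a b v : real_root a b v -> exists s n, v = spos a b s n.
Proof. by case/real_pos => n [->|->]; [exists true | exists false]; exists n. Qed.

Theorem corollary3p2 (a b : nat) (Sigma : seq (int * int)) :
  (0 < b)%N -> (b <= a)%N -> ((2 <= b)%N \/ (b = 1%N /\ (5 <= a)%N)) ->
  Sigma <> [::] ->
  pi_system a b Sigma -> lin_indep Sigma ->
  size Sigma = 1%N \/
  exists (w : seq bool) (j k : nat),
    pi_system a b [:: beta1 a b j; beta2 a b k] /\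
    (map (Wact a b w) Sigma =i [:: beta1 a b j; beta2 a b k] \/
     map (Wact a b w) Sigma =i map negr [:: beta1 a b j; beta2 a b k]).
Proof.
move=> Hb0 Hba Hcase Hne Hpi Hli.
have H : hyp a b by split.
case: Sigma Hne Hpi Hli => [//|x [|y [|z s]]] _ Hpi Hli.
- by left.
- right.
  have [Hxy Hxny] := lin2 Hli.
  have Hx : x \in [:: x; y] by rewrite !inE eqxx.
  have Hy : y \in [:: x; y] by rewrite !inE eqxx orbT.
  have [sx [n Ex]] := real_spos (Hpi.1 x Hx).
  have [sy [m Ey]] := real_spos (Hpi.1 y Hy).
  have Hr1 : ~ Defs.root a b (sub x y) := Hpi.2 x y Hx Hy.
  have Hr2 : ~ Defs.root a b (sub y x) := Hpi.2 y x Hy Hx.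
  have Hgood : goodpair a b x y.
    case: (ltgtP n m) => [Hnm|Hnm|Enm].
    + by rewrite Ex Ey; apply: pair_main => //; rewrite -Ex -Ey.
    + by apply: goodpair_sym; rewrite Ex Ey; apply: pair_main => //; rewrite -Ex -Ey.
    + exfalso; subst m; move: Hxy Hxny.
      by case: sx sy Ex Ey => [] [] -> -> H1 H2; rewrite /spos in H1 H2;
        first [exact: H1 | apply: H2; rewrite ?negrK //].
  case: Hgood => w [j [k Hw]].
  exists w, j, k; split; last by [].
  exact: pi_transfer Hpi Hw.
- exfalso; move: (free_size3 Hli); by rewrite size_map.
Qed.
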